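(* Let $n\ge 3$. The Hosoya polynomial of the power graph $P(G(n))$ of the gyrogroup $G(n)$ (defined in the context) is $$H(P(G(n)),x)=2^n x^0+\frac{2^{n-1}(2^{n-1}+1)}{2}x^1+\frac{3\cdot 2^{n-1}(2^{n-1}-1)}{2}x^2.$$
   Context: Let $n\ge 3$ be an integer and $m=2^{n-1}$. Let $P(n)=\{0,1,\dots,m-1\}$, $H(n)=\{m,m+1,\dots,2^n-1\}$ and $G(n)=P(n)\cup H(n)$. For $i,j\in G(n)$ let $t,s,k\in P(n)$ be the residues modulo $m$ (taken in $\{0,\dots,m-1\}$) of $i+j$, $i+(\frac m2-1)j$ and $(\frac m2+1)i+(\frac m2-1)j$, respectively, and define $i\oplus j=t$ if $i,j\in P(n)$; $i\oplus j=t+m$ if $i\in P(n),j\in H(n)$; $i\oplus j=s+m$ if $i\in H(n),j\in P(n)$; $i\oplus j=k$ if $i,j\in H(n)$. Then $(G(n),\oplus)$ is a gyrogroup with identity $e=0$. Powers are defined by $a^1=a$, $a^{k+1}=a^k\oplus a$. The power graph $P(G(n))$ is the simple undirected graph with vertex set $G(n)$ in which distinct vertices $u,v$ are adjacent if and only if $u^k=v$ or $v^k=u$ for some positive integer $k$. For a connected graph $G$, $dis(G,i)$ denotes the number of unordered pairs $\{u,v\}$ of vertices (with $u=v$ allowed) at distance $i$, and the Hosoya polynomial is $H(G,x)=\sum_{i\ge 0} dis(G,i)x^i$. *)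

(* Defs.v *)
From HB Require Import structures.
From mathcomp Require Import all_boot all_order all_algebra.
From mathcomp Require Import boolp.
Set Implicit Arguments. Unset Strict Implicit. Unset Printing Implicit Defensive.
Import Order.TTheory GRing.Theory Num.Theory.

(* m = 2^(n-1); elements of G(n) are the naturals 0 .. 2^n - 1. *)
Definition gm (n : nat) : nat := 2 ^ n.-1.

(* The gyrogroup operation of G(n) (on nat; P(n) = [0,m), H(n) = [m,2m)). *)
Definition gop (n i j : nat) : nat :=
  let m := gm n in
  let t := (i + j) %% m in
  let s := (i + (m %/ 2 - 1) * j) %% m in
  let k := ((m %/ 2 + 1) * i + (m %/ 2 - 1) * j) %% m in
  if i < m then (if j < m then t else t + m)
  else (if j < m then s + m else k).

(* gpow n a k = a^k for k >= 1 : a^1 = a, a^(k+1) = a^k (+) a.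
   (The value at k = 0 is irrelevant; it is only used with k > 0.) *)
Fixpoint gpow (n a k : nat) : nat :=
  match k with
  | 0 => a
  | S k' => match k' with
            | 0 => a
            | _ => gop n (gpow n a k') a
            end
  end.

Definition V (n : nat) := 'I_(2 ^ n).

Definition padj (n : nat) (u v : V n) : Prop :=
  u <> v /\ exists k, 0 < k /\ (gpow n u k = v \/ gpow n v k = u).

Fixpoint pwalk (n : nat) (k : nat) (u v : V n) : Prop :=
  match k with
  | 0 => u = v
  | S k' => exists w : V n, padj u w /\ pwalk k' w v
  end.

Definition pdist_is (n i : nat) (u v : V n) : Prop :=
  pwalk i u v /\ (forall j, j < i -> ~ pwalk j u v).

(* dis(P(G(n)), i): number of unordered pairs {u,v} (u = v allowed)
   at distance i; unordered pairs are represented by (u,v) with u <= v. *)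
Definition dis (n i : nat) : nat :=
  #|[set p : V n * V n | (p.1 <= p.2)%N && `[< pdist_is i p.1 p.2 >]]|.

(* Hosoya polynomial; distances in a graph on 2^n vertices are < 2^n. *)
Definition hosoya (n : nat) : {poly rat} :=
  \sum_(i < 2 ^ n) ((dis n i)%:R *: 'X^i).

(* Main.v *)
Require Import Defs.
From HB Require Import structures.
From mathcomp Require Import all_boot all_order all_algebra.
From mathcomp Require Import boolp zify.
Import GRing.Theory Num.Theory.

Lemma bez (j u v : nat) : exists k, 0 < k /\
  ((k * u) %% 2 ^ j = v %% 2 ^ j \/ (k * v) %% 2 ^ j = u %% 2 ^ j).
Proof.
set M := 2 ^ j.
have M0 : 0 < M by rewrite expn_gt0.
have [->|u0] := posnP u.
  by exists M; split => //; right; rewrite modnMr mod0n.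
have [->|v0] := posnP v.
  by exists M; split => //; left; rewrite modnMr mod0n.
have gen : forall x y, 0 < x -> 0 < y -> gcdn x M %| y -> exists k, 0 < k /\ (k * x) %% M = y %% M.
  move=> x y x0 y0 dg.
  case: (egcdnP M x0) => kx kM Heq _.
  exists (kx * (y %/ gcdn x M) + M); split; first by rewrite addn_gt0 M0 orbT.
  have -> : (kx * (y %/ gcdn x M) + M) * x = (y %/ gcdn x M * kM + x) * M + y.
    have Hy : y = y %/ gcdn x M * gcdn x M by rewrite divnK.
    move: (y %/ gcdn x M) (gcdn x M) Heq Hy => q g Heq Hy.
    rewrite {3}Hy; nia.
  by rewrite modnMDl.
have [a _ Ha] : exists2 a, a <= j & gcdn u M = 2 ^ a by apply/dvdn_pfactor => //; rewrite dvdn_gcdr.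
have [b _ Hb] : exists2 b, b <= j & gcdn v M = 2 ^ b by apply/dvdn_pfactor => //; rewrite dvdn_gcdr.
case: (leqP a b) => hab.
  have [k [k0 hk]] : exists k, 0 < k /\ (k * u) %% M = v %% M.
    apply: gen => //; rewrite Ha (dvdn_trans (dvdn_exp2l 2 hab)) // -Hb dvdn_gcdl //.
  by exists k; split => //; left.
have [k [k0 hk]] : exists k, 0 < k /\ (k * v) %% M = u %% M.
  apply: gen => //; rewrite Hb (dvdn_trans (dvdn_exp2l 2 (ltnW hab))) // -Ha dvdn_gcdl //.
by exists k; split => //; right.
Qed.

Lemma gm_facts n : 3 <= n ->
  [/\ 4 <= gm n, gm n %/ 2 + 1 + (gm n %/ 2 - 1) = gm n & 2 ^ n = 2 * gm n].
Proof.
move=> hn; rewrite /gm.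
have -> : n = (n - 3).+3 by lia.
rewrite /= !expnS; have : 0 < 2 ^ (n - 3) by rewrite expn_gt0.
move: (2 ^ (n - 3)) => q q0.
split; try lia.
Qed.

Lemma gpow_succ n a k : gpow n a k.+2 = gop n (gpow n a k.+1) a.
Proof. by []. Qed.

Lemma gpowP n u k : u < gm n -> gpow n u k.+1 = (k.+1 * u) %% gm n.
Proof.
move=> Hu; have m0 : 0 < gm n by rewrite expn_gt0.
elim: k => [|k IH]; first by rewrite mul1n modn_small.
rewrite gpow_succ IH /gop ltn_pmod // Hu /= modnDml [k.+2 * u]mulSn addnC.
by [].
Qed.

Lemma gpowH n u k : 3 <= n -> gm n <= u < 2 * gm n ->
  gpow n u k.+1 = if odd k then 0 else u.
Proof.
move=> hn /andP[h1 h2]; case: (gm_facts n hn) => m4 hm _.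
have hu : (u < gm n) = false by rewrite ltnNge h1.
elim: k => [|k IH] //.
rewrite gpow_succ IH /=; case: (odd k) => /=.
  rewrite /gop /= hu /= (leq_ltn_trans (leq0n 3) m4) add0n.
  rewrite -{1}(subnK h1) modnDr modn_small ?subnK //; lia.
rewrite /gop /= hu /= -mulnDl hm.
by rewrite mulnC modnMl.
Qed.
Definition adjb n (a b : nat) : bool :=
  (a != b) && ((a < gm n) && (b < gm n) || (a == 0) || (b == 0)).

Lemma pow_cases n x k y : 3 <= n -> x < 2 * gm n -> 0 < k -> gpow n x k = y -> x <> y ->
  (x < gm n /\ y < gm n) \/ y = 0.
Proof.
move=> hn hx; case: k => [//|k] _ <- hne.
have m0 : 0 < gm n by rewrite expn_gt0.
case: (ltnP x (gm n)) => h.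
  by left; rewrite gpowP // ltn_pmod.
move: hne; rewrite gpowH // ?h ?hx //; case: (odd k) => [_|/(_ erefl) []]; by right.
Qed.

Lemma pow_zero n x : 3 <= n -> x < 2 * gm n -> exists k, 0 < k /\ gpow n x k = 0.
Proof.
move=> hn hx; have m0 : 0 < gm n by rewrite expn_gt0.
case: (ltnP x (gm n)) => h.
  exists (gm n); split => //; rewrite -(prednK m0) gpowP // (prednK m0).
  by rewrite modnMr.
by exists 2; split => //; rewrite gpowH // h hx.
Qed.

Lemma adjNP n u v : 3 <= n -> u < 2 ^ n -> v < 2 ^ n ->
  (u <> v /\ exists k, 0 < k /\ (gpow n u k = v \/ gpow n v k = u)) <-> adjb n u v.
Proof.
move=> hn; case: (gm_facts n hn) => m4 _ ->.
have m0 : 0 < gm n by rewrite expn_gt0.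
move=> hu hv; rewrite /adjb; split.
  move=> [hne [k [k0 [h|h]]]]; apply/andP; (split; first by apply/eqP).
    case: (pow_cases _ _ _ _ hn hu k0 h hne) => [[h1 h2]|->]; by rewrite ?h1 ?h2 ?eqxx ?orbT.
  have hne' : v <> u by move=> e; apply: hne.
  case: (pow_cases _ _ _ _ hn hv k0 h hne') => [[h1 h2]|->]; by rewrite ?h1 ?h2 ?eqxx ?orbT.
move=> /andP[/eqP hne H]; split => //.
case/orP: H => [/orP[/andP[hu' hv']|/eqP u0]|/eqP v0].
- have [k [k0 hk]] := bez n.-1 u v.
  case: k k0 hk => [//|k] _ [hk|hk].
    exists k.+1; split => //; left; rewrite gpowP // hk modn_small //.
  exists k.+1; split => //; right; rewrite gpowP // hk modn_small //.
- subst u; have [k [k0 hk]] := pow_zero _ _ hn hv.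
  by exists k; split => //; right.
- subst v; have [k [k0 hk]] := pow_zero _ _ hn hu.
  by exists k; split => //; left.
Qed.

Lemma padjE n (hn : 3 <= n) (u v : V n) : padj u v <-> adjb n u v.
Proof.
rewrite -adjNP //; rewrite /padj; split; move=> [h1 h2]; split => //.
  by move=> e; apply: h1; apply: val_inj.
by move=> e; apply: h1; rewrite e.
Qed.

Definition Distb n i (a b : nat) : bool :=
  match i with
  | 0 => a == b
  | 1 => adjb n a b
  | 2 => (a != b) && ~~ adjb n a b
  | _ => false
  end.

Lemma walk1 n (u v : V n) : pwalk 1 u v <-> padj u v.
Proof. by split => [[w [h <-]]|h] //; exists v. Qed.

Lemma walk2 n (hn : 3 <= n) (u v : V n) : val u != val v -> ~~ adjb n u v -> pwalk 2 u v.
Proof.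
move=> hne hna.
have z0 : 0 < 2 ^ n by rewrite expn_gt0.
have hu0 : val u != 0.
  apply/negP => /eqP e; move: hna; rewrite /adjb hne e eqxx /=; by rewrite !orbT.
have hv0 : val v != 0.
  apply/negP => /eqP e; move: hna; rewrite /adjb hne e eqxx /=; by rewrite !orbT.
exists (Ordinal z0); split.
  by apply/(padjE _ hn) => //; rewrite /adjb /= hu0 eqxx !orbT.
apply/walk1/(padjE _ hn) => //; rewrite /adjb /= eq_sym hv0 eqxx /=; by rewrite orbT.
Qed.

Lemma pdistE n (hn : 3 <= n) i (u v : V n) : pdist_is i u v <-> Distb n i u v.
Proof.
have w0 : pwalk 0 u v <-> val u == val v.
  by split => [->//|/eqP/val_inj].
case: i => [|[|[|i]]] /=.
- split; first by case=> /w0.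
  by move=> /w0 h; split => // j; rewrite ltn0.
- split; first by case=> /walk1/(padjE _ hn).
  move=> h; split; first by apply/walk1/(padjE _ hn).
  case=> // _ /w0 e; move: h; by rewrite /adjb e.
- split.
    case=> _ H; apply/andP; split.
      by apply/negP => /w0 h; exact: (H 0 isT h).
    by apply/negP => /(padjE _ hn)/walk1 h; exact: (H 1 isT h).
  move=> /andP[h1 h2]; split; first exact: walk2.
  case=> [|[|//]] _; first by move/w0; rewrite (negbTE h1).
  by move/walk1/(padjE _ hn); rewrite (negbTE h2).
- split => // [[_ H]]; exfalso.
  case e: (val u == val v); first by have := H 0 isT; apply; apply/w0.
  case a: (adjb n u v); first by have := H 1 isT; apply; apply/walk1/(padjE _ hn).
  by have := H 2 isT; apply; apply: walk2 => //; rewrite ?e ?a.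
Qed.

Lemma disE n (hn : 3 <= n) i :
  dis n i = \sum_(u < 2 ^ n) \sum_(v < 2 ^ n) ((u <= v) && Distb n i u v).
Proof.
rewrite /dis.
have -> : [set p : V n * V n | (p.1 <= p.2)%N && `[< pdist_is i p.1 p.2 >]] =
          [set p : V n * V n | (p.1 <= p.2)%N && Distb n i p.1 p.2].
  apply/setP => p; rewrite !inE; congr (_ && _).
  by apply: (asbool_equiv_eqP idP); exact: pdistE.
rewrite -sum1_card big_mkcond /= [RHS]pair_big /=.
by apply: eq_bigr => p _; rewrite inE; case: ifP.
Qed.

Lemma L1 N a b : \sum_(v < N) ((a <= v) && (v < b)) = minn N b - a.
Proof.
elim: N => [|N IH]; first by rewrite big_ord0; lia.
rewrite big_ord_recr /= IH.
by case: (leqP a N) => h1; case: (ltnP N b) => h2 /=; lia.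
Qed.

Lemma L2 K a : 2 * \sum_(u < K) (a - u) = minn K a * (2 * a + 1 - minn K a).
Proof.
elim: K => [|K IH]; first by rewrite big_ord0; lia.
rewrite big_ord_recr /= mulnDr IH.
case: (ltnP K a) => h.
  rewrite (minn_idPl h).
  have [d ->] : exists d, a = K + d.+1 by exists (a - K.+1); lia.
  nia.
rewrite (minn_idPr (leqW h)).
have -> : a - K = 0 by lia.
by rewrite muln0 addn0.
Qed.

Lemma pw1 n (u v : nat) : 3 <= n -> v < 2 ^ n ->
  ((u <= v) && adjb n u v : nat) = (u == 0) * ((gm n <= v) && (v < 2 ^ n)) + ((u.+1 <= v) && (v < gm n)).
Proof.
move=> hn hv; case: (gm_facts n hn) => m4 _ e.
rewrite /adjb; lia.
Qed.

Lemma pw0 (u v : nat) : ((u <= v) && (u == v) : nat) = ((u <= v) && (v < u.+1)).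
Proof. lia. Qed.

Lemma pwT n (u v : nat) : ((u <= v) : nat) = ((u <= v) && Distb n 0 u v) + ((u <= v) && Distb n 1 u v) + ((u <= v) && Distb n 2 u v).
Proof. rewrite /Distb /adjb; lia. Qed.

Lemma pw1' n (u v : nat) : 3 <= n -> v < 2 ^ n ->
  ((u <= v) && Distb n 1 u v : nat) = (u == 0) * ((gm n <= v) && (v < 2 ^ n)) + ((u.+1 <= v) && (v < gm n)).
Proof. exact: pw1. Qed.

Lemma pw0' n (u v : nat) : ((u <= v) && Distb n 0 u v : nat) = ((u <= v) && (v < u.+1)).
Proof. exact: pw0. Qed.

Lemma D0 n (hn : 3 <= n) : dis n 0 = 2 ^ n.
Proof.
rewrite disE //.
transitivity (\sum_(u < 2 ^ n) 1); last by rewrite sum_nat_const card_ord muln1.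
apply: eq_bigr => u _.
under eq_bigr => v _ do rewrite pw0'.
rewrite L1; have := ltn_ord u; lia.
Qed.

Lemma D1 n (hn : 3 <= n) : 2 * dis n 1 = gm n * (gm n + 1).
Proof.
case: (gm_facts n hn) => m4 _ e.
rewrite disE //.
have inner : forall u : 'I_(2 ^ n), \sum_(v < 2 ^ n) ((u <= v) && Distb n 1 u v) =
   ((0 <= u) && (u < 1)) * gm n + (gm n - 1 - u).
  move=> u; under eq_bigr => v _ do rewrite (pw1' _ _ _ hn (ltn_ord v)).
  rewrite big_split /= -big_distrr /= !L1; lia.
rewrite (eq_bigr _ (fun u _ => inner u)) big_split /= -big_distrl /=.
have h := L1 (2 ^ n) 0 1; rewrite /= in h; rewrite h mulnDr L2.
have -> : minn (2 ^ n) 1 = 1 by lia.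
have -> : minn (2 ^ n) (gm n - 1) = gm n - 1 by lia.
have [p ->] : exists p, gm n = p + 4 by exists (gm n - 4); lia.
nia.
Qed.

Lemma Tot n (hn : 3 <= n) : 2 * (dis n 0 + dis n 1 + dis n 2) = 2 ^ n * (2 ^ n + 1).
Proof.
rewrite !disE // -!big_split /=.
transitivity (2 * \sum_(u < 2 ^ n) (2 ^ n - u)); last by rewrite L2 minnn; lia.
congr (2 * _); apply: eq_bigr => u _.
rewrite -!big_split /=.
transitivity (\sum_(v < 2 ^ n) ((u <= v) && (v < 2 ^ n))); last by rewrite L1 minnn.
apply: eq_bigr => v _; rewrite ltn_ord andbT.
by symmetry; exact: (pwT n u v).
Qed.

Lemma Dbig n (hn : 3 <= n) i : 3 <= i -> dis n i = 0.
Proof.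
move=> hi; rewrite disE //.
have -> : i = (i - 3).+3 by lia.
by rewrite big1 // => u _; rewrite big1 // => v _; rewrite andbF.
Qed.

Lemma D2 n (hn : 3 <= n) : 2 * dis n 2 = 3 * gm n * (gm n - 1).
Proof.
have h0 := D0 _ hn; have h1 := D1 _ hn; have hT := Tot _ hn.
case: (gm_facts n hn) => m4 _ e.
rewrite h0 e in hT.
have [p hp] : exists p, gm n = p + 4 by exists (gm n - 4); lia.
rewrite hp in hT h1 *.
nia.
Qed.

From mathcomp Require Import ring.
Local Open Scope ring_scope.

Theorem mainTheorem4 (n : nat) (hn : (3 <= n)%N) :
  hosoya n =
    (2 ^ n)%:R *: 'X^0
    + ((2 ^ n.-1 * (2 ^ n.-1 + 1))%:R / 2%:R : rat) *: 'X^1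
    + ((3 * 2 ^ n.-1 * (2 ^ n.-1 - 1))%:R / 2%:R : rat) *: 'X^2.
Proof.
have N3 : (3 <= 2 ^ n)%N by case: (gm_facts n hn) => m4 _ ->; lia.
rewrite /hosoya -(big_mkord xpredT (fun i => (dis n i)%:R *: 'X^i)).
rewrite (big_cat_nat _ (n := 3)) //=.
rewrite [X in _ + X]big_nat_cond [X in _ + X]big1; last first.
  by move=> i /andP[/andP[hi _] _]; rewrite Dbig // scale0r.
rewrite addr0 big_ltn // big_ltn // big_ltn // big_geq // addr0 addrA.
rewrite D0 //.
have h1 : (dis n 1)%:R = ((2 ^ n.-1 * (2 ^ n.-1 + 1))%:R / 2%:R : rat).
  by rewrite -[(2 ^ n.-1)%N]/(gm n) -D1 // natrM; field.
have h2 : (dis n 2)%:R = ((3 * 2 ^ n.-1 * (2 ^ n.-1 - 1))%:R / 2%:R : rat).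
  by rewrite -[(2 ^ n.-1)%N]/(gm n) -D2 // natrM; field.
by rewrite h1 h2.
Qed.
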